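(* Let $\Bbbk$ be a field, $n\ge2$, $q\in\Bbbk$ a primitive $n$-th root of unity, $C_n=\langle g\rangle$ the cyclic group of order $n$ and $A$ a unital associative $\Bbbk$-algebra. Let $\cdot:\Bbbk C_n\otimes A\to A$ be a partial action of $\Bbbk C_n$ on $A$. Then for each $w\in A$ such that $g^i\cdot w=q^{-i}(g^i\cdot1_A)w$ for all $0\le i\le n-1$, one has $$g^i\cdot\big(w^\ell(g^j\cdot a)w^k\big)=q^{-i(\ell+k)}(g^i\cdot1_A)w^\ell(g^{i+j}\cdot a)w^k$$ for all $a\in A$, $\ell,k\ge0$ and $0\le i,j\le n-1$; in particular $g^i\cdot w^k=q^{-ik}(g^i\cdot1_A)w^k$. Moreover, if the partial action is symmetric, then $g^i\cdot(w^\ell(g^j\cdot a)w^k)=q^{-i(\ell+k)}w^\ell(g^{i+j}\cdot a)w^k(g^i\cdot1_A)$.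
   Context: $\Bbbk C_n$ is the group Hopf algebra with $g$ group-like; exponents of $g$ are read modulo $n$. A partial action of a bialgebra $H$ on $A$ is a linear map $\cdot:H\otimes A\to A$ with $1_H\cdot a=a$, $h\cdot(ab)=(h_1\cdot a)(h_2\cdot b)$, $h\cdot(k\cdot a)=(h_1\cdot1_A)(h_2k\cdot a)$; it is symmetric if moreover $h\cdot(k\cdot a)=(h_1k\cdot a)(h_2\cdot1_A)$. *)

(* Defs.v *)
From HB Require Import structures.
From mathcomp Require Import all_boot all_order all_algebra.
Set Implicit Arguments. Unset Strict Implicit. Unset Printing Implicit Defensive.
Import GRing.Theory.
Local Open Scope ring_scope.

(* A linear map  k C_n (x) A -> A  is determined by (and determines) the family
   of linear maps  act i := (g^i . _) : A -> A.  We index by i : nat and read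
   exponents of g modulo n, i.e. act is n-periodic. Since every element of
   k C_n is a linear combination of the group-likes g^i (with Delta g^i =
   g^i (x) g^i), the partial action axioms for all h, k in k C_n are
   equivalent (by bilinearity) to the axioms on the basis g^i, g^j. *)

Definition is_partial_action (K : fieldType) (A : algType K) (n : nat)
  (act : nat -> A -> A) : Prop :=
  [/\ (forall i a, act (i + n)%N a = act i a),               (* g^n = 1 *)
      (forall i (c : K) (x y : A), act i (c *: x + y) = c *: act i x + act i y),
      (forall a, act 0%N a = a),
      (forall i a b, act i (a * b) = act i a * act i b) &
      (forall i j a, act i (act j a) = act i 1 * act (i + j)%N a)].

Definition is_symmetric_partial_action (K : fieldType) (A : algType K) (n : nat)
  (act : nat -> A -> A) : Prop :=
  is_partial_action n act /\
  (forall i j a, act i (act j a) = act (i + j)%N a * act i 1).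

(* Main.v *)
Require Import Defs.
From HB Require Import structures.
From mathcomp Require Import all_boot all_order all_algebra.
Import GRing.Theory.
Local Open Scope ring_scope.

Lemma qsplit (K : fieldType) (q : K) i l k :
  q ^- (i * k) * q ^- (i * l) = q ^- (i * (l + k)).
Proof. by rewrite mulnDr exprD invfM mulrC. Qed.

Theorem corollary3p6 (K : fieldType) (A : algType K) (n : nat) (q : K)
  (act : nat -> A -> A) :
  (2 <= n)%N -> n.-primitive_root q -> is_partial_action n act ->
  forall w : A,
    (forall i : nat, (i < n)%N -> act i w = q ^- i *: (act i 1 * w)) ->
    (forall (a : A) (l k i j : nat), (i < n)%N -> (j < n)%N ->
       act i (w ^+ l * act j a * w ^+ k)
       = q ^- (i * (l + k)) *: (act i 1 * w ^+ l * act (i + j)%N a * w ^+ k))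
    /\ (forall k i : nat, (i < n)%N ->
       act i (w ^+ k) = q ^- (i * k) *: (act i 1 * w ^+ k))
    /\ (is_symmetric_partial_action n act ->
       forall (a : A) (l k i j : nat), (i < n)%N -> (j < n)%N ->
       act i (w ^+ l * act j a * w ^+ k)
       = q ^- (i * (l + k)) *: (w ^+ l * act (i + j)%N a * w ^+ k * act i 1)).
Proof.
move=> _ _ [Hper Hlin H0 Hmul Hcomp] w Hw.
have Re : forall i x, act i x * act i 1 = act i x.
  by move=> i x; rewrite -Hmul mulr1.
have Pw : forall k i : nat, (i < n)%N ->
    act i (w ^+ k) = q ^- (i * k) *: (act i 1 * w ^+ k).
  move=> k i Hi; elim: k => [|k IH].
    by rewrite !expr0 muln0 expr0 invr1 scale1r mulr1.
  rewrite exprSr Hmul (Hw i Hi) -scalerAr (mulrA (act i (w ^+ k))) Re IH -scalerAl scalerA.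
  by rewrite mulnS exprD invfM mulrA.
have Main : forall (a : A) (l k i j : nat), (i < n)%N -> (j < n)%N ->
       act i (w ^+ l * act j a * w ^+ k)
       = q ^- (i * (l + k)) *: (act i 1 * w ^+ l * act (i + j)%N a * w ^+ k).
  move=> a l k i j Hi Hj.
  have eXe : act i 1 * act (i + j)%N a * act i 1 = act i 1 * act (i + j)%N a.
    by rewrite -Hcomp Re.
  have LXe : act i (w ^+ l) * act (i + j)%N a * act i 1
            = act i (w ^+ l) * act (i + j)%N a.
    by rewrite -{1}(Re i (w ^+ l)) -!mulrA (mulrA (act i 1)) eXe mulrA Re.
  rewrite !Hmul Hcomp (Pw k i Hi) (mulrA (act i (w ^+ l))) Re -scalerAr.
  rewrite mulrA LXe (Pw l i Hi) -!scalerAl scalerA qsplit.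
  by rewrite ?mulrA.
split; first exact: Main.
split; first exact: Pw.
move=> [_ Hsym] a l k i j Hi Hj.
have cent : forall x, act i 1 * x = x * act i 1.
  move=> x.
  have En : (i + (n - i) = n)%N by rewrite subnKC // ltnW.
  have Ax : act n x = x by have := Hper 0%N x; rewrite add0n H0.
  by have := Hsym i (n - i)%N x; rewrite Hcomp En Ax.
rewrite Main //; congr (_ *: _).
by rewrite -!mulrA cent !mulrA.
Qed.
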